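(* Let $N\ge2$, $\rho\in[0,1)$, $f<0$, $g<0$, and $\nu\in i\mathbb{R}$. Suppose the leader moves as $z_0(t)=e^{\nu t}$, so that $\Gamma_0(t)=g_0(\nu)e^{\nu t}$ with $g_0(\nu)=-(1-\rho)(f+g\nu)e_2$. Then $\nu$ is not an eigenvalue of $M$, and every solution $z(t)$ of $\dot z=Mz+\Gamma_0(t)$ satisfies $z(t)-a(\nu)e^{\nu t}\to0$ as $t\to\infty$, where $a(\nu)=-(M-\nu I)^{-1}g_0(\nu)$. In particular $z_k(t)-a_k(\nu)e^{\nu t}\to0$ for each $1\le k\le N$, where $a_k(\nu)$ is the $(2k-1)$-th entry of $a(\nu)$.
   Context: Model: agents $0,\dots,N$ on the line with deviations $z_k(t)$; leader trajectory $z_0$ prescribed; for $1\le i\le N-1$, $\ddot z_i=f\{z_i-(1-\rho)z_{i-1}-\rho z_{i+1}\}+g\{\dot z_i-(1-\rho)\dot z_{i-1}-\rho\dot z_{i+1}\}$, and $\ddot z_N=f\{z_N-z_{N-1}\}+g\{\dot z_N-\dot z_{N-1}\}$. In first-order form with $z=(z_1,\dot z_1,\dots,z_N,\dot z_N)^T\in\mathbb{C}^{2N}$: $\dot z=Mz+\Gamma_0(t)$, $M=I_N\otimes A+P\otimes K$, $A=\begin{pmatrix}0&1\\0&0\end{pmatrix}$, $K=\begin{pmatrix}0&0\\ f&g\end{pmatrix}$, $P=I_N-Q_\rho$ with $Q_\rho$ the $N\times N$ matrix with zero diagonal, $(Q_\rho)_{i,i+1}=\rho$ ($1\le i\le N-1$),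 $(Q_\rho)_{i,i-1}=1-\rho$ ($2\le i\le N-1$), $(Q_\rho)_{N,N-1}=1$, other entries $0$; $\Gamma_0(t)=-(1-\rho)(fz_0(t)+g\dot z_0(t))e_2$, $e_2$ the second standard basis vector of $\mathbb{C}^{2N}$. *)

(* Defs.v *)
From Stdlib Require Import Reals Arith.
Open Scope R_scope.

Definition Cx := (R * R)%type.
Definition RtoC (x : R) : Cx := (x, 0).
Definition C0 : Cx := (0, 0).
Definition Cadd (z w : Cx) : Cx := (fst z + fst w, snd z + snd w).
Definition Copp (z : Cx) : Cx := (- fst z, - snd z).
Definition Csub (z w : Cx) : Cx := Cadd z (Copp w).
Definition Cmul (z w : Cx) : Cx :=
  (fst z * fst w - snd z * snd w, fst z * snd w + snd z * fst w).
Definition Cmod (z : Cx) : R := sqrt (fst z ^ 2 + snd z ^ 2).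
Definition Cexp (z : Cx) : Cx := (exp (fst z) * cos (snd z), exp (fst z) * sin (snd z)).

Fixpoint Csum (n : nat) (F : nat -> Cx) : Cx :=
  match n with O => C0 | S m => Cadd (Csum m F) (F m) end.

(* vectors of C^{2N}: entries indexed 0 .. 2N-1; entry 2(k-1) is z_k,
   entry 2(k-1)+1 is dz_k/dt (k = 1..N) *)
Definition cvec := nat -> Cx.

Definition A_entry (a b : nat) : R :=
  if andb (a =? 0)%nat (b =? 1)%nat then 1 else 0.
Definition K_entry (f g : R) (a b : nat) : R :=
  if andb (a =? 1)%nat (b =? 0)%nat then f
  else if andb (a =? 1)%nat (b =? 1)%nat then g else 0.

(* Q_rho with 0-based indices i, j in 0..N-1:
   (Q)_{i,i+1} = rho for 0 <= i <= N-2;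
   (Q)_{i,i-1} = 1 - rho for 1 <= i <= N-2;
   (Q)_{N-1,N-2} = 1; all other entries 0. *)
Definition Q_entry (N : nat) (rho : R) (i j : nat) : R :=
  if andb (j =? i + 1)%nat (j <? N)%nat then rho
  else if andb (i =? j + 1)%nat (i + 1 <? N)%nat then 1 - rho
  else if andb (i + 1 =? N)%nat (i =? j + 1)%nat then 1
  else 0.

Definition P_entry (N : nat) (rho : R) (i j : nat) : R :=
  (if (i =? j)%nat then 1 else 0) - Q_entry N rho i j.

(* M = I_N (x) A + P (x) K, row index r = 2i + a, column index c = 2j + b *)
Definition M_entry (N : nat) (rho f g : R) (r c : nat) : R :=
  let i := (r / 2)%nat in let a := (r mod 2)%nat in
  let j := (c / 2)%nat in let b := (c mod 2)%nat in
  (if (i =? j)%nat then A_entry a b else 0) + P_entry N rho i j * K_entry f g a b.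

Definition Mv (N : nat) (rho f g : R) (v : cvec) : cvec :=
  fun r => Csum (2 * N) (fun c => Cmul (RtoC (M_entry N rho f g r c)) (v c)).

Definition is_eigenvalue (N : nat) (rho f g : R) (nu : Cx) : Prop :=
  exists v : cvec,
    (exists r, (r < 2 * N)%nat /\ v r <> C0) /\
    (forall r, (r < 2 * N)%nat -> Mv N rho f g v r = Cmul nu (v r)).

(* e_2: second standard basis vector (0-based index 1) *)
Definition e2 : cvec := fun r => if (r =? 1)%nat then RtoC 1 else C0.

Definition g0 (rho f g : R) (nu : Cx) : cvec :=
  fun r => Cmul (RtoC (- (1 - rho))) (Cmul (Cadd (RtoC f) (Cmul (RtoC g) nu)) (e2 r)).

Definition Gamma0 (rho f g : R) (nu : Cx) (t : R) : cvec :=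
  fun r => Cmul (g0 rho f g nu r) (Cexp (Cmul (RtoC t) nu)).

Definition is_solution (N : nat) (rho f g : R) (nu : Cx) (z : R -> cvec) : Prop :=
  forall r, (r < 2 * N)%nat -> forall t : R,
    derivable_pt_lim (fun s => fst (z s r)) t
      (fst (Cadd (Mv N rho f g (z t) r) (Gamma0 rho f g nu t r))) /\
    derivable_pt_lim (fun s => snd (z s r)) t
      (snd (Cadd (Mv N rho f g (z t) r) (Gamma0 rho f g nu t r))).

(* Main.v *)
Require Import Defs.
From Stdlib Require Import Reals Arith Lra Lia Psatz FunctionalExtensionality Ring Field.
Open Scope R_scope.

Fixpoint rsum (n : nat) (F : nat -> R) : R :=
  match n with O => 0 | S m => rsum m F + F m end.

Lemma rsum_ext n F G : (forall i, (i < n)%nat -> F i = G i) -> rsum n F = rsum n G.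
Proof. induction n; simpl; intros H; auto. rewrite IHn by (intros; apply H; lia). rewrite H by lia; auto. Qed.

Lemma rsum_plus n F G : rsum n (fun i => F i + G i) = rsum n F + rsum n G.
Proof. induction n; simpl; [ring|rewrite IHn; ring]. Qed.

Lemma rsum_minus n F G : rsum n (fun i => F i - G i) = rsum n F - rsum n G.
Proof. induction n; simpl; [ring|rewrite IHn; ring]. Qed.

Lemma rsum_scal n a F : rsum n (fun i => a * F i) = a * rsum n F.
Proof. induction n; simpl; [ring|rewrite IHn; ring]. Qed.

Lemma rsum_zero n : rsum n (fun _ => 0) = 0.
Proof. induction n; simpl; [ring|rewrite IHn; ring]. Qed.

Lemma rsum_point n k X : (k < n)%nat ->
  rsum n (fun i => if (i =? k)%nat then X else 0) = X.
Proof.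
  induction n; intros H; [lia|]. simpl.
  destruct (Nat.eq_dec k n).
  - subst. rewrite Nat.eqb_refl.
    rewrite (rsum_ext _ _ (fun _ => 0)). rewrite rsum_zero; ring.
    intros i Hi. destruct (Nat.eqb_spec i n); [lia|auto].
  - rewrite IHn by lia. destruct (Nat.eqb_spec n k); [lia|ring].
Qed.

Lemma rsum_point_out n k X : (n <= k)%nat ->
  rsum n (fun i => if (i =? k)%nat then X else 0) = 0.
Proof.
  intros H. rewrite (rsum_ext _ _ (fun _ => 0)). apply rsum_zero.
  intros i Hi. destruct (Nat.eqb_spec i k); [lia|auto].
Qed.

Lemma rsum_double n F : rsum (2 * n) F = rsum n (fun j => F (2 * j)%nat + F (2 * j + 1)%nat).
Proof.
  induction n; [simpl; auto|].
  replace (2 * S n)%nat with (S (S (2 * n))) by lia. cbn [rsum].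
  rewrite IHn. replace (2*n+1)%nat with (S (2 * n))%nat by lia.
  replace (2 * S n)%nat with (S (S (2 * n))) by lia. ring.
Qed.

Lemma rsum_nonneg n F : (forall i, (i < n)%nat -> 0 <= F i) -> 0 <= rsum n F.
Proof. induction n; simpl; intros H; [lra|]. pose proof (H n ltac:(lia)). pose proof (IHn ltac:(intros; apply H; lia)). lra. Qed.

Lemma rsum_ge_term n F k : (forall i, (i < n)%nat -> 0 <= F i) -> (k < n)%nat -> F k <= rsum n F.
Proof.
  induction n; intros H Hk; [lia|]. simpl.
  destruct (Nat.eq_dec k n).
  - subst. pose proof (rsum_nonneg n F ltac:(intros; apply H; lia)). lra.
  - pose proof (IHn ltac:(intros; apply H; lia) ltac:(lia)). pose proof (H n ltac:(lia)). lra.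
Qed.

Lemma rsum_le n F G : (forall i, (i < n)%nat -> F i <= G i) -> rsum n F <= rsum n G.
Proof. induction n; simpl; intros H; [lra|]. pose proof (H n ltac:(lia)). pose proof (IHn ltac:(intros; apply H; lia)). lra. Qed.

Lemma rsum_zero_terms n F : (forall i, (i < n)%nat -> 0 <= F i) -> rsum n F = 0 ->
  forall k, (k < n)%nat -> F k = 0.
Proof.
  intros H Hs k Hk. pose proof (rsum_ge_term n F k H Hk). pose proof (H k Hk). lra.
Qed.

Lemma D_plus u v t a b : derivable_pt_lim u t a -> derivable_pt_lim v t b ->
  derivable_pt_lim (fun s => u s + v s) t (a + b).
Proof. intros. apply (derivable_pt_lim_plus u v); auto. Qed.
Lemma D_minus u v t a b : derivable_pt_lim u t a -> derivable_pt_lim v t b ->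
  derivable_pt_lim (fun s => u s - v s) t (a - b).
Proof. intros. apply (derivable_pt_lim_minus u v); auto. Qed.
Lemma D_mult u v t a b : derivable_pt_lim u t a -> derivable_pt_lim v t b ->
  derivable_pt_lim (fun s => u s * v s) t (a * v t + u t * b).
Proof. intros. apply (derivable_pt_lim_mult u v); auto. Qed.
Lemma D_const c t : derivable_pt_lim (fun _ => c) t 0.
Proof. apply (derivable_pt_lim_const c). Qed.
Lemma D_scal c u t a : derivable_pt_lim u t a -> derivable_pt_lim (fun s => c * u s) t (c * a).
Proof. intros. apply (derivable_pt_lim_scal u c); auto. Qed.
Lemma D_eq u t a b : a = b -> derivable_pt_lim u t a -> derivable_pt_lim u t b.
Proof. intros ->; auto. Qed.
Lemma D_ext u v t a : (forall s, u s = v s) -> derivable_pt_lim u t a -> derivable_pt_lim v t a.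
Proof. intros. apply (derivable_pt_lim_ext u v); auto. Qed.

Lemma D_rsum n (F : nat -> R -> R) (F' : nat -> R) t :
  (forall i, (i < n)%nat -> derivable_pt_lim (F i) t (F' i)) ->
  derivable_pt_lim (fun s => rsum n (fun i => F i s)) t (rsum n F').
Proof.
  induction n; intros H; simpl.
  - apply D_const.
  - apply D_plus. apply IHn; intros; apply H; lia. apply H; lia.
Qed.

Lemma D_exp_lin c t : derivable_pt_lim (fun s => exp (c * s)) t (c * exp (c * t)).
Proof.
  apply D_eq with (exp (c*t) * c). ring.
  apply (derivable_pt_lim_comp (fun s => c * s) exp t c (exp (c*t))).
  apply D_eq with (c * 1). ring. apply D_scal. apply derivable_pt_lim_id.
  apply derivable_pt_lim_exp.
Qed.

Definition tends0 (u : R -> R) := forall eps, eps > 0 -> exists T, forall t, t >= T -> Rabs (u t) < eps.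

Lemma decay (V D k : R -> R) (c : R) : c > 0 ->
  (forall t, derivable_pt_lim V t (D t)) ->
  (forall t, 0 <= V t) ->
  (forall t, D t <= - c * V t + k t) ->
  (forall eta, eta > 0 -> exists T, forall t, t >= T -> k t <= eta) ->
  forall eta, eta > 0 -> exists T, forall t, t >= T -> V t < eta.
Proof.
  intros Hc HD HV Hle Hk eta Heta.
  destruct (Hk (c * eta / 2)) as [T1 HT1]. nra.
  set (W := fun s => (V s - eta/2) * exp (c * s)).
  assert (HW : forall s, derivable_pt_lim W s ((D s - 0) * exp (c*s) + (V s - eta/2) * (c * exp (c * s)))).
  { intros s. unfold W. apply (D_mult (fun s => V s - eta/2) (fun s => exp (c*s))). apply (D_minus V (fun _ => eta/2)). apply HD. apply D_const. apply D_exp_lin. }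
  assert (Hdec : forall t, t > T1 -> W t <= W T1).
  { intros t Ht. destruct (MVT_cor2 W _ T1 t Ht (fun s _ => HW s)) as [x [Hx1 Hx2]].
    assert (((D x - 0) * exp (c*x) + (V x - eta/2) * (c * exp (c * x))) <= 0).
    { pose proof (exp_pos (c*x)). pose proof (Hle x). pose proof (HT1 x ltac:(lra)).
      replace ((D x - 0) * exp (c*x) + (V x - eta/2) * (c * exp (c * x))) with
        ((D x + c * V x - c*eta/2) * exp (c*x)) by (field).
      idtac.
      assert (D x + c * V x - c*eta/2 <= 0) by lra. nra. }
    assert (0 < t - T1) by lra. nra. }
  set (A := V T1).
  exists (T1 + 2 * A / (eta * c) + 1). intros t Ht.
  assert (HA : 0 <= A) by apply HV.
  assert (0 <= 2 * A / (eta * c)). { apply Rmult_le_pos. lra. left. apply Rinv_0_lt_compat. nra. }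
  pose proof (Hdec t ltac:(lra)) as H1. unfold W in H1.
  assert (He : exp (c * t) = exp (c * T1) * exp (c * (t - T1))).
  { rewrite <- exp_plus. f_equal; ring. }
  rewrite He in H1.
  pose proof (exp_pos (c * T1)). pose proof (exp_pos (c * (t - T1))).
  assert (HH2 : (V t - eta / 2) * exp (c * (t - T1)) <= A - eta / 2).
  { apply Rmult_le_reg_r with (exp (c*T1)); auto. fold A in H1. nra. }
  assert (Hbig : exp (c * (t - T1)) > 2 * A / eta).
  { assert (H3: 1 + c * (t - T1) <= exp (c * (t - T1))).
    { destruct (Req_dec (c*(t-T1)) 0) as [E|E]. rewrite E, exp_0; lra.
      left. apply exp_ineq1. assert (c*(t-T1) > 0) by (apply Rmult_lt_0_compat; lra). lra. }
    assert (c * (t - T1) > 2 * A / eta).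
    { assert (t - T1 > 2 * A / (eta * c)) by lra.
      replace (2 * A / eta) with (c * (2 * A / (eta * c))) by (field; lra).
      apply Rmult_lt_compat_l; lra. }
    lra. }
  destruct (Rle_or_lt (V t) (eta/2)). lra.
  assert ((V t - eta/2) * exp (c * (t - T1)) > (V t - eta/2) * (2 * A / eta)) by (apply Rmult_lt_compat_l; lra).
  assert ((V t - eta/2) * (2 * A / eta) >= 0).
  { apply Rle_ge, Rmult_le_pos. lra. apply Rmult_le_pos. lra. left; apply Rinv_0_lt_compat; lra. }
  (* from H2: (V t - eta/2) E <= A - eta/2 ; so E*(Vt - eta/2) < A. If V t >= eta, then (Vt-eta/2) >= eta/2, E*(eta/2) > A  -> contradiction *)
  destruct (Rlt_or_le (V t) eta) as [Hlt|Hge]; auto.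
  exfalso.
  assert ((V t - eta/2) * exp (c * (t - T1)) >= (eta/2) * exp (c*(t-T1))) by (apply Rle_ge, Rmult_le_compat_r; lra).
  assert ((eta/2) * exp (c*(t-T1)) > (eta/2) * (2*A/eta)) by (apply Rmult_lt_compat_l; lra).
  replace ((eta/2) * (2*A/eta)) with A in * by (field; lra).
  lra.
Qed.

Lemma rsum_S n F : rsum (S n) F = rsum n F + F n.
Proof. reflexivity. Qed.

Lemma fst_Csum n F : fst (Csum n F) = rsum n (fun c => fst (F c)).
Proof. induction n; simpl; auto. rewrite IHn; auto. Qed.
Lemma snd_Csum n F : snd (Csum n F) = rsum n (fun c => snd (F c)).
Proof. induction n; simpl; auto. rewrite IHn; auto. Qed.

Definition realMv (N : nat) (rho f g : R) (x : nat -> R) (r : nat) : R :=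
  rsum (2 * N) (fun c => M_entry N rho f g r c * x c).

Lemma Mv_fst N rho f g v r : fst (Mv N rho f g v r) = realMv N rho f g (fun c => fst (v c)) r.
Proof. unfold Mv, realMv. rewrite fst_Csum. apply rsum_ext. intros. simpl. ring. Qed.
Lemma Mv_snd N rho f g v r : snd (Mv N rho f g v r) = realMv N rho f g (fun c => snd (v c)) r.
Proof. unfold Mv, realMv. rewrite snd_Csum. apply rsum_ext. intros. simpl. ring. Qed.

Definition Pexp (N : nat) (rho : R) (y : nat -> R) (i : nat) : R :=
  if (i =? 0)%nat then y 0%nat - rho * y 1%nat
  else if (i + 1 =? N)%nat then y i - y (i - 1)%nat
  else y i - (1 - rho) * y (i - 1)%nat - rho * y (i + 1)%nat.

Lemma Q_point N rho i j y : (2 <= N)%nat -> (i < N)%nat ->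
  Q_entry N rho i j * y j =
  (if (j =? i + 1)%nat then (if (i + 1 <? N)%nat then rho * y (i+1)%nat else 0) else 0) +
  (if (j =? i - 1)%nat then (if (1 <=? i)%nat then
       (if (i + 1 <? N)%nat then (1 - rho) else 1) * y (i - 1)%nat else 0) else 0).
Proof.
  intros HN Hi. unfold Q_entry.
  destruct (Nat.eqb_spec j (i+1)); destruct (Nat.ltb_spec j N); destruct (Nat.eqb_spec i (j+1));
  destruct (Nat.ltb_spec (i+1) N); destruct (Nat.eqb_spec (i+1) N); destruct (Nat.eqb_spec j (i-1));
  destruct (Nat.leb_spec 1 i); simpl; try subst; try lia; try ring;
  try (replace (i+1-1)%nat with i by lia); try (replace (j+1-1)%nat with j by lia); try ring.
Qed.

Lemma P_row N rho i y : (2 <= N)%nat -> (i < N)%nat ->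
  rsum N (fun j => P_entry N rho i j * y j) = Pexp N rho y i.
Proof.
  intros HN Hi.
  rewrite (rsum_ext _ _ (fun j => (if (j =? i)%nat then y i else 0) - Q_entry N rho i j * y j)).
  2:{ intros j Hj. unfold P_entry. destruct (Nat.eqb_spec i j); destruct (Nat.eqb_spec j i); subst; try lia; ring. }
  rewrite rsum_minus, rsum_point by auto.
  rewrite (rsum_ext _ _ (fun j => _ + _)) by (intros; apply Q_point; auto).
  rewrite rsum_plus.
  unfold Pexp.
  destruct (Nat.eqb_spec i 0).
  - subst. rewrite rsum_point by lia. simpl.
    rewrite rsum_point by lia. destruct (Nat.ltb_spec 1 N); try lia. simpl.
    try ring.
  - destruct (Nat.leb_spec 1 i); try lia.
    rewrite (rsum_point N (i-1)) by lia.
    destruct (Nat.eqb_spec (i+1) N).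
    + rewrite rsum_point_out by lia. destruct (Nat.ltb_spec (i+1) N); try lia. ring.
    + destruct (Nat.ltb_spec (i+1) N); try lia. rewrite rsum_point by lia. ring.
Qed.

Lemma div2_even i : ((2 * i) / 2 = i)%nat.
Proof. rewrite Nat.mul_comm. apply Nat.div_mul. lia. Qed.
Lemma mod2_even i : ((2 * i) mod 2 = 0)%nat.
Proof. rewrite Nat.mul_comm. apply Nat.Div0.mod_mul. Qed.
Lemma div2_odd i : ((2 * i + 1) / 2 = i)%nat.
Proof. symmetry. apply (Nat.div_unique _ 2 i 1); lia. Qed.
Lemma mod2_odd i : ((2 * i + 1) mod 2 = 1)%nat.
Proof. symmetry. apply (Nat.mod_unique _ 2 i 1); lia. Qed.

Lemma realMv_even N rho f g x i : (i < N)%nat ->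
  realMv N rho f g x (2 * i)%nat = x (2 * i + 1)%nat.
Proof.
  intros Hi. unfold realMv. rewrite rsum_double.
  rewrite (rsum_ext _ _ (fun j => if (j =? i)%nat then x (2 * i + 1)%nat else 0)).
  apply rsum_point; auto.
  intros j Hj. unfold M_entry. rewrite !div2_even, !mod2_even, div2_odd, mod2_odd.
  unfold A_entry, K_entry; simpl.
  destruct (Nat.eqb_spec i j); destruct (Nat.eqb_spec j i); subst; try lia; ring.
Qed.

Lemma realMv_odd N rho f g x i : (2 <= N)%nat -> (i < N)%nat ->
  realMv N rho f g x (2 * i + 1)%nat =
  f * Pexp N rho (fun j => x (2 * j)%nat) i + g * Pexp N rho (fun j => x (2 * j + 1)%nat) i.
Proof.
  intros HN Hi. unfold realMv. rewrite rsum_double.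
  rewrite (rsum_ext _ _ (fun j => f * (P_entry N rho i j * x (2 * j)%nat) + g * (P_entry N rho i j * x (2*j+1)%nat))).
  rewrite rsum_plus, !rsum_scal, !P_row; auto.
  intros j Hj. unfold M_entry. rewrite !div2_even, !mod2_even, !div2_odd, !mod2_odd.
  unfold A_entry, K_entry; simpl.
  destruct (Nat.eqb_spec i j); ring.
Qed.

Lemma Pexp_lin N rho a b u v i :
  Pexp N rho (fun j => a * u j + b * v j) i = a * Pexp N rho u i + b * Pexp N rho v i.
Proof. unfold Pexp. destruct (i =? 0)%nat; [ring|]. destruct (i+1 =? N)%nat; ring. Qed.

Lemma Pexp_ext N rho u v i : (forall j, (j < N)%nat -> u j = v j) -> (2 <= N)%nat -> (i < N)%nat ->
  Pexp N rho u i = Pexp N rho v i.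
Proof.
  intros H HN Hi. unfold Pexp.
  destruct (Nat.eqb_spec i 0). rewrite !H by lia; auto.
  destruct (Nat.eqb_spec (i+1) N). rewrite !H by lia; auto. rewrite !H by lia; auto.
Qed.

Definition beta (rho : R) := rho / (1 - rho).
Definition w (N : nat) (rho : R) (i : nat) : R :=
  if (i + 1 =? N)%nat then rho * beta rho ^ (N - 2) else beta rho ^ i.
Definition cc (rho : R) (i : nat) := rho * beta rho ^ i.
Definition Bf (N : nat) (rho : R) (u v : nat -> R) : R :=
  (1 - rho) * u 0%nat * v 0%nat +
  rsum (N - 1) (fun i => cc rho i * (u i - u (i + 1)%nat) * (v i - v (i + 1)%nat)).
Definition Ef (N : nat) (rho : R) (u v : nat -> R) : R :=
  rsum N (fun i => w N rho i * u i * v i).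

Lemma beta_pos rho : 0 < rho < 1 -> 0 < beta rho.
Proof. intros. unfold beta. apply Rdiv_lt_0_compat; lra. Qed.
Lemma w_pos N rho i : 0 < rho < 1 -> 0 < w N rho i.
Proof. intros H. pose proof (beta_pos rho H). unfold w. destruct (_ =? _)%nat.
  apply Rmult_lt_0_compat; [lra| apply pow_lt; auto]. apply pow_lt; auto. Qed.
Lemma cc_pos rho i : 0 < rho < 1 -> 0 < cc rho i.
Proof. intros H. pose proof (beta_pos rho H). unfold cc. apply Rmult_lt_0_compat; [lra| apply pow_lt; auto]. Qed.

Lemma SBP_prefix N rho u y : 0 < rho < 1 -> forall m, (m + 2 <= N)%nat ->
  rsum (S m) (fun i => w N rho i * u i * Pexp N rho y i) =
  (1 - rho) * u 0%nat * y 0%nat +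
  rsum m (fun i => cc rho i * (u i - u (i + 1)%nat) * (y i - y (i + 1)%nat)) +
  cc rho m * u m * (y m - y (m + 1)%nat).
Proof.
  intros Hr. induction m; intros Hm.
  - cbn [rsum]. unfold w, Pexp, cc. replace (0+1)%nat with 1%nat by lia. destruct (Nat.eqb_spec 1 N); try lia. simpl. ring.
  - rewrite rsum_S. rewrite IHm by lia.
    rewrite (rsum_S m (fun i => cc rho i * _ * _)). set (S0 := rsum m _). unfold Pexp, w, cc.
    destruct (Nat.eqb_spec (S m) 0); try lia.
    destruct (Nat.eqb_spec (S m + 1) N); try lia.
    replace (S m - 1)%nat with m by lia. replace (S m + 1)%nat with (m + 2)%nat by lia.
    replace (m + 1)%nat with (S m) by lia.
    simpl pow. set (bm := beta rho ^ m). unfold beta. field. lra.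
Qed.

Lemma SBP N rho u y : 0 < rho < 1 -> (2 <= N)%nat ->
  rsum N (fun i => w N rho i * u i * Pexp N rho y i) = Bf N rho u y.
Proof.
  intros Hr HN. destruct N as [|[|m]]; try lia.
  rewrite rsum_S. rewrite SBP_prefix by (auto; lia).
  unfold Bf. replace (S (S m) - 1)%nat with (S m) by lia. rewrite rsum_S.
  unfold Pexp, w, cc. destruct (Nat.eqb_spec (S m) 0); try lia.
  destruct (Nat.eqb_spec (S m + 1) (S (S m))); try lia.
  replace (S m - 1)%nat with m by lia. replace (S (S m) - 2)%nat with m by lia.
  replace (m + 1)%nat with (S m) by lia. ring.
Qed.

Lemma Bf_sym N rho u v : Bf N rho u v = Bf N rho v u.
Proof. unfold Bf. f_equal. ring. apply rsum_ext; intros; ring. Qed.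
Lemma Ef_sym N rho u v : Ef N rho u v = Ef N rho v u.
Proof. unfold Ef. apply rsum_ext; intros; ring. Qed.

Lemma Bf_lin N rho u a b v y :
  Bf N rho u (fun i => a * v i + b * y i) = a * Bf N rho u v + b * Bf N rho u y.
Proof.
  unfold Bf. rewrite (rsum_ext _ _ (fun i => a * (cc rho i * (u i - u (i + 1)%nat) * (v i - v (i + 1)%nat))
     + b * (cc rho i * (u i - u (i + 1)%nat) * (y i - y (i + 1)%nat)))) by (intros; ring).
  rewrite rsum_plus, !rsum_scal. ring.
Qed.
Lemma Ef_lin N rho u a b v y :
  Ef N rho u (fun i => a * v i + b * y i) = a * Ef N rho u v + b * Ef N rho u y.
Proof.
  unfold Ef. rewrite (rsum_ext _ _ (fun i => a * (w N rho i * u i * v i) + b * (w N rho i * u i * y i))) by (intros; ring).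
  rewrite rsum_plus, !rsum_scal. ring.
Qed.
Lemma Bf_ext N rho u v v' : (2 <= N)%nat -> (forall j, (j < N)%nat -> v j = v' j) -> Bf N rho u v = Bf N rho u v'.
Proof. intros HN H. unfold Bf. rewrite !H by lia. f_equal. apply rsum_ext. intros. rewrite !H by lia. auto. Qed.
Lemma Ef_ext N rho u v v' : (forall j, (j < N)%nat -> v j = v' j) -> Ef N rho u v = Ef N rho u v'.
Proof. intros H. unfold Ef. apply rsum_ext. intros. rewrite !H by lia. auto. Qed.

Lemma Bf_nonneg N rho u : 0 < rho < 1 -> 0 <= Bf N rho u u.
Proof.
  intros Hr. unfold Bf. pose proof (rsum_nonneg (N-1) (fun i => cc rho i * (u i - u (i + 1)%nat) * (u i - u (i + 1)%nat))).
  assert (0 <= rsum (N - 1) (fun i => cc rho i * (u i - u (i + 1)%nat) * (u i - u (i + 1)%nat))).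
  { apply H. intros. pose proof (cc_pos rho i Hr). rewrite Rmult_assoc. apply Rmult_le_pos; [lra|]. apply Rle_0_sqr. }
  assert (0 <= (1 - rho) * u 0%nat * u 0%nat). { rewrite Rmult_assoc. apply Rmult_le_pos; [lra|]. apply Rle_0_sqr. }
  lra.
Qed.

Lemma Bf_ge0 N rho u : 0 < rho < 1 -> (1 - rho) * (u 0%nat * u 0%nat) <= Bf N rho u u.
Proof.
  intros Hr. unfold Bf.
  assert (0 <= rsum (N - 1) (fun i => cc rho i * (u i - u (i + 1)%nat) * (u i - u (i + 1)%nat))).
  { apply rsum_nonneg. intros. pose proof (cc_pos rho i Hr). rewrite Rmult_assoc. apply Rmult_le_pos; [lra|]. apply Rle_0_sqr. }
  lra.
Qed.

Lemma Bf_gek N rho u k : 0 < rho < 1 -> (k + 1 < N)%nat ->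
  cc rho k * ((u k - u (k+1)%nat) * (u k - u (k+1)%nat)) <= Bf N rho u u.
Proof.
  intros Hr Hk. unfold Bf.
  assert (cc rho k * ((u k - u (k+1)%nat) * (u k - u (k+1)%nat)) <=
    rsum (N - 1) (fun i => cc rho i * (u i - u (i + 1)%nat) * (u i - u (i + 1)%nat))).
  { rewrite <- Rmult_assoc. apply (rsum_ge_term _ (fun i => cc rho i * (u i - u (i + 1)%nat) * (u i - u (i + 1)%nat))).
    intros. pose proof (cc_pos rho i Hr). rewrite Rmult_assoc. apply Rmult_le_pos; [lra|]. apply Rle_0_sqr. lia. }
  assert (0 <= (1 - rho) * u 0%nat * u 0%nat). { rewrite Rmult_assoc. apply Rmult_le_pos; [lra|]. apply Rle_0_sqr. }
  lra.
Qed.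

Lemma coerc_k N rho : 0 < rho < 1 -> forall k, (k < N)%nat ->
  exists K, K > 0 /\ forall u, u k * u k <= K * Bf N rho u u.
Proof.
  intros Hr. induction k; intros Hk.
  - exists (/ (1 - rho)). split. apply Rinv_0_lt_compat; lra.
    intros u. pose proof (Bf_ge0 N rho u Hr).
    apply Rmult_le_reg_l with (1 - rho). lra. replace ((1 - rho) * (/ (1 - rho) * Bf N rho u u)) with (Bf N rho u u) by (field; lra). lra.
  - destruct (IHk ltac:(lia)) as [K [HK H]].
    pose proof (cc_pos rho k Hr).
    exists (2 * K + 2 / cc rho k). split.
    { assert (0 < 2 / cc rho k) by (apply Rdiv_lt_0_compat; lra). lra. }
    intros u. pose proof (H u). pose proof (Bf_gek N rho u k Hr ltac:(lia)).
    replace (k+1)%nat with (S k) in H2 by lia.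
    assert (Hd : (u k - u (S k)) * (u k - u (S k)) <= Bf N rho u u / cc rho k).
    { apply Rmult_le_reg_l with (cc rho k). lra. replace (cc rho k * (Bf N rho u u / cc rho k)) with (Bf N rho u u) by (field; lra). lra. }
    assert (u (S k) * u (S k) <= 2 * (u k * u k) + 2 * ((u k - u (S k)) * (u k - u (S k)))).
    { pose proof (Rle_0_sqr (2 * u k - u (S k))) as Hq. unfold Rsqr in Hq. nra. }
    replace ((2 * K + 2 / cc rho k) * Bf N rho u u) with (2 * (K * Bf N rho u u) + 2 * (Bf N rho u u / cc rho k)) by (field; lra).
    lra.
Qed.

Lemma coerc_E N rho : 0 < rho < 1 -> exists K, K > 0 /\ forall u, Ef N rho u u <= K * Bf N rho u u.
Proof.
  intros Hr.
  assert (forall n, (n <= N)%nat -> exists K, K > 0 /\ forall u, rsum n (fun i => w N rho i * u i * u i) <= K * Bf N rho u u).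
  { induction n; intros Hn.
    - exists 1. split. lra. intros u. simpl. pose proof (Bf_nonneg N rho u Hr). lra.
    - destruct (IHn ltac:(lia)) as [K [HK H]].
      destruct (coerc_k N rho Hr n ltac:(lia)) as [K1 [HK1 H1]].
      pose proof (w_pos N rho n Hr).
      exists (K + w N rho n * K1). split. nra.
      intros u. simpl. pose proof (H u). pose proof (H1 u).
      assert (w N rho n * (u n * u n) <= w N rho n * (K1 * Bf N rho u u)) by (apply Rmult_le_compat_l; lra).
      nra. }
  destruct (H N (le_n N)) as [K [HK HK2]]. exists K. split; auto.
Qed.

Lemma Ef_nonneg N rho u : 0 < rho < 1 -> 0 <= Ef N rho u u.
Proof. intros Hr. unfold Ef. apply rsum_nonneg. intros. pose proof (w_pos N rho i Hr). rewrite Rmult_assoc. apply Rmult_le_pos; [lra|apply Rle_0_sqr]. Qed.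

Lemma Ef_gek N rho u k : 0 < rho < 1 -> (k < N)%nat -> w N rho k * (u k * u k) <= Ef N rho u u.
Proof. intros Hr Hk. unfold Ef. rewrite <- Rmult_assoc. apply (rsum_ge_term _ (fun i => w N rho i * u i * u i)); auto.
  intros. pose proof (w_pos N rho i Hr). rewrite Rmult_assoc. apply Rmult_le_pos; [lra|apply Rle_0_sqr]. Qed.

Lemma Ef_cs N rho u v : 0 < rho < 1 -> 2 * Rabs (Ef N rho u v) <= Ef N rho u u + Ef N rho v v.
Proof.
  intros Hr.
  assert (H1 : 0 <= Ef N rho u u + Ef N rho v v - 2 * Ef N rho u v).
  { unfold Ef. rewrite <- rsum_scal, <- rsum_plus, <- rsum_minus. apply rsum_nonneg. intros.
    pose proof (w_pos N rho i Hr). pose proof (Rle_0_sqr (u i - v i)). unfold Rsqr in *. nra. }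
  assert (H2 : 0 <= Ef N rho u u + Ef N rho v v + 2 * Ef N rho u v).
  { unfold Ef. rewrite <- rsum_scal, <- rsum_plus, <- rsum_plus. apply rsum_nonneg. intros.
    pose proof (w_pos N rho i Hr). pose proof (Rle_0_sqr (u i + v i)). unfold Rsqr in *. nra. }
  unfold Rabs. destruct (Rcase_abs _); lra.
Qed.

Lemma D_Bf N rho (u v : R -> nat -> R) u' v' t : (2 <= N)%nat ->
  (forall i, (i < N)%nat -> derivable_pt_lim (fun s => u s i) t (u' i)) ->
  (forall i, (i < N)%nat -> derivable_pt_lim (fun s => v s i) t (v' i)) ->
  derivable_pt_lim (fun s => Bf N rho (u s) (v s)) t (Bf N rho u' (v t) + Bf N rho (u t) v').
Proof.
  intros HN Hu Hv. unfold Bf.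
  eapply D_eq.
  2:{ apply (D_plus (fun s => (1 - rho) * u s 0%nat * v s 0%nat)
        (fun s => rsum (N-1) (fun i => cc rho i * (u s i - u s (i + 1)%nat) * (v s i - v s (i + 1)%nat)))).
    - apply (D_mult (fun s => (1 - rho) * u s 0%nat) (fun s => v s 0%nat)). apply D_scal. apply Hu; lia. apply Hv; lia.
    - apply (D_rsum (N-1) (fun i s => cc rho i * (u s i - u s (i + 1)%nat) * (v s i - v s (i + 1)%nat))).
      intros i Hi. apply (D_mult (fun s => cc rho i * (u s i - u s (i + 1)%nat)) (fun s => v s i - v s (i + 1)%nat)).
      apply D_scal. apply (D_minus (fun s => u s i) (fun s => u s (i+1)%nat)); apply Hu; lia.
      apply (D_minus (fun s => v s i) (fun s => v s (i+1)%nat)); apply Hv; lia. }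
  match goal with |- ?A + rsum ?n ?F = ?B + rsum _ ?G1 + (?C + rsum _ ?G2) =>
    assert (rsum n F = rsum n G1 + rsum n G2) by (rewrite <- rsum_plus; apply rsum_ext; intros; ring) end.
  lra.
Qed.

Lemma D_Ef N rho (u v : R -> nat -> R) u' v' t :
  (forall i, (i < N)%nat -> derivable_pt_lim (fun s => u s i) t (u' i)) ->
  (forall i, (i < N)%nat -> derivable_pt_lim (fun s => v s i) t (v' i)) ->
  derivable_pt_lim (fun s => Ef N rho (u s) (v s)) t (Ef N rho u' (v t) + Ef N rho (u t) v').
Proof.
  intros Hu Hv. unfold Ef.
  eapply D_eq.
  2:{ apply (D_rsum N (fun i s => w N rho i * u s i * v s i)).
    intros i Hi. apply (D_mult (fun s => w N rho i * u s i) (fun s => v s i)). apply D_scal. apply Hu; lia. apply Hv; lia. }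
  rewrite <- rsum_plus. apply rsum_ext. intros; ring.
Qed.

Lemma sq_small x eps : 0 < eps -> x * x < eps * eps -> Rabs x < eps.
Proof. intros He H. unfold Rabs. destruct (Rcase_abs x); nra. Qed.

Lemma tends0_lin a b u v : tends0 u -> tends0 v -> tends0 (fun t => a * u t + b * v t).
Proof.
  intros Hu Hv eps He.
  set (M := Rabs a + Rabs b + 1).
  assert (HM : M > 0) by (unfold M; pose proof (Rabs_pos a); pose proof (Rabs_pos b); lra).
  destruct (Hu (eps / M)) as [T1 H1]. apply Rdiv_lt_0_compat; lra.
  destruct (Hv (eps / M)) as [T2 H2]. apply Rdiv_lt_0_compat; lra.
  exists (Rmax T1 T2). intros t Ht.
  pose proof (H1 t ltac:(pose proof (Rmax_l T1 T2); lra)).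
  pose proof (H2 t ltac:(pose proof (Rmax_r T1 T2); lra)).
  eapply Rle_lt_trans. apply Rabs_triang. rewrite !Rabs_mult.
  pose proof (Rabs_pos a); pose proof (Rabs_pos b).
  assert (Rabs a * Rabs (u t) <= Rabs a * (eps / M)) by (apply Rmult_le_compat_l; lra).
  assert (Rabs b * Rabs (v t) <= Rabs b * (eps / M)) by (apply Rmult_le_compat_l; lra).
  assert ((Rabs a + Rabs b) * (eps / M) < eps).
  { replace eps with (M * (eps / M)) at 2 by (field; lra). apply Rmult_lt_compat_r.
    apply Rdiv_lt_0_compat; lra. unfold M; lra. }
  lra.
Qed.

Lemma tends0_sq u : tends0 u -> forall eta, eta > 0 -> exists T, forall t, t >= T -> u t * u t <= eta.
Proof.
  intros Hu eta He. destruct (Hu (Rmin 1 eta)) as [T HT]. apply Rmin_pos; lra.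
  exists T. intros t Ht. pose proof (HT t Ht). pose proof (Rmin_l 1 eta). pose proof (Rmin_r 1 eta).
  pose proof (Rabs_pos (u t)).
  rewrite <- (Rabs_pos_eq (u t * u t)) by nra. rewrite Rabs_mult. nra.
Qed.

Lemma from_V (V u : R -> R) (c : R) : c > 0 -> (forall t, c * (u t * u t) <= V t) ->
  (forall eta, eta > 0 -> exists T, forall t, t >= T -> V t < eta) -> tends0 u.
Proof.
  intros Hc HV Hd eps He. destruct (Hd (c * (eps * eps))) as [T HT]. { apply Rmult_gt_0_compat; [lra| apply Rmult_gt_0_compat; lra]. }
  exists T. intros t Ht. apply sq_small; auto. pose proof (HV t). pose proof (HT t Ht).
  apply Rmult_lt_reg_l with c; lra.
Qed.

Lemma conv2d (f g : R) (p q h : R -> R) : f < 0 -> g < 0 ->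
  (forall t, derivable_pt_lim p t (q t)) ->
  (forall t, derivable_pt_lim q t (f * p t + g * q t - h t)) ->
  tends0 h -> tends0 p /\ tends0 q.
Proof.
  intros Hf Hg Hp Hq Hh.
  set (eps := Rmin 1 (Rmin (- f) (- g / 2))).
  assert (He1 : eps <= 1) by apply Rmin_l.
  assert (He2 : eps <= - f) by (eapply Rle_trans; [apply Rmin_r| apply Rmin_l]).
  assert (He3 : eps <= - g / 2) by (eapply Rle_trans; [apply Rmin_r| apply Rmin_r]).
  assert (He0 : 0 < eps) by (apply Rmin_pos; [lra| apply Rmin_pos; lra]).
  set (del := Rmin (- g / 16) (- f / 4)).
  assert (Hd1 : del <= - g / 16) by apply Rmin_l.
  assert (Hd2 : del <= - f / 4) by apply Rmin_r.
  assert (Hd0 : 0 < del) by (apply Rmin_pos; lra).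
  set (V := fun t => - f * (p t * p t) + q t * q t + eps * (p t * q t - g / 2 * (p t * p t))).
  set (D := fun t => 2 * g * (q t * q t) - 2 * q t * h t + eps * (q t * q t) + eps * f * (p t * p t) - eps * p t * h t).
  set (C := - f - g + 2).
  set (m := Rmin (- g) (- eps * f / 2)).
  assert (Hm0 : 0 < m) by (apply Rmin_pos; nra).
  assert (Hm1 : m <= - g) by apply Rmin_l.
  assert (Hm2 : m <= - eps * f / 2) by apply Rmin_r.
  assert (HC : C > 0) by (unfold C; lra).
  assert (HVlow : forall t, (- f / 2) * (p t * p t) + (1/2) * (q t * q t) <= V t).
  { intros t. unfold V. generalize (p t) (q t). intros a b.
    assert (0 <= eps * ((a+b)*(a+b))) by (apply Rmult_le_pos; [lra| apply Rle_0_sqr]).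
    assert (0 <= (- eps * g / 2) * (a*a)) by (apply Rmult_le_pos; [nra| apply Rle_0_sqr]).
    assert (0 <= (- f / 2 - eps / 2) * (a*a)) by (apply Rmult_le_pos; [lra| apply Rle_0_sqr]).
    assert (0 <= (1 / 2 - eps / 2) * (b*b)) by (apply Rmult_le_pos; [lra| apply Rle_0_sqr]).
    lra. }
  assert (HVup : forall t, V t <= C * (p t * p t + q t * q t)).
  { intros t. unfold V, C. generalize (p t) (q t). intros a b.
    assert (0 <= eps * ((a-b)*(a-b))) by (apply Rmult_le_pos; [lra| apply Rle_0_sqr]).
    assert (0 <= (- g / 2 + eps * g / 2) * (a*a)) by (apply Rmult_le_pos; [nra| apply Rle_0_sqr]).
    assert (0 <= (1 / 2 - eps / 2) * (a*a)) by (apply Rmult_le_pos; [lra| apply Rle_0_sqr]).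
    assert (0 <= (1 / 2 - eps / 2) * (b*b)) by (apply Rmult_le_pos; [lra| apply Rle_0_sqr]).
    assert (0 <= 2 * (b*b)) by (pose proof (Rle_0_sqr b); unfold Rsqr in *; lra).
    assert (0 <= (- g) * (b*b)) by (apply Rmult_le_pos; [lra| apply Rle_0_sqr]).
    assert (0 <= (- f) * (b*b)) by (apply Rmult_le_pos; [lra| apply Rle_0_sqr]).
    assert (0 <= 2 * (a*a)) by (pose proof (Rle_0_sqr a); unfold Rsqr in *; lra).
    assert (0 <= (- g) * (a*a)) by (apply Rmult_le_pos; [lra| apply Rle_0_sqr]).
    lra. }
  assert (HVD : forall t, derivable_pt_lim V t (D t)).
  { intros t. unfold V, D. eapply D_eq.
    2:{ apply (D_plus (fun s => - f * (p s * p s) + q s * q s) (fun s => eps * (p s * q s - g / 2 * (p s * p s)))).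
      apply (D_plus (fun s => - f * (p s * p s)) (fun s => q s * q s)).
      apply D_scal. apply (D_mult p p); apply Hp.
      apply (D_mult q q); apply Hq.
      apply D_scal. apply (D_minus (fun s => p s * q s) (fun s => g / 2 * (p s * p s))).
      apply (D_mult p q). apply Hp. apply Hq. apply D_scal. apply (D_mult p p); apply Hp. }
    field. }
  assert (HDle : forall t, D t <= - (m / C) * V t + h t * h t / (4 * del)).
  { intros t. pose proof (HVup t). unfold D. unfold V in H |- *. generalize H; clear H. generalize (p t) (q t) (h t). intros a b c HVu.
    set (z := 2 * b + eps * a).
    assert (Y : - z * c <= del * (z * z) + c * c / (4 * del)).
    { apply Rmult_le_reg_l with (4 * del). lra.
      replace (4 * del * (del * (z * z) + c * c / (4 * del))) with (4 * del * del * (z * z) + c * c) by (field; lra).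
      pose proof (Rle_0_sqr (2 * del * z + c)) as Hy. unfold Rsqr in Hy. lra. }
    assert (Z : z * z <= 8 * (b * b) + 2 * (eps * eps) * (a * a)).
    { unfold z. pose proof (Rle_0_sqr (2 * b - eps * a)) as Hz. unfold Rsqr in Hz. lra. }
    assert (Z2 : del * (z * z) <= del * (8 * (b * b) + 2 * (eps * eps) * (a * a))) by (apply Rmult_le_compat_l; lra).
    assert (Z3 : 0 <= (- g / 2 - del * 8) * (b * b)) by (apply Rmult_le_pos; [lra| apply Rle_0_sqr]).
    assert (Z4a : del * 2 * (eps * eps) <= - eps * f / 2).
    { assert (del * 2 * eps <= - f / 2) by nra.
      replace (del * 2 * (eps * eps)) with ((del * 2 * eps) * eps) by field.
      replace (- eps * f / 2) with ((- f / 2) * eps) by field.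
      apply Rmult_le_compat_r; lra. }
    assert (Z4 : 0 <= (- eps * f / 2 - del * 2 * (eps * eps)) * (a * a)) by (apply Rmult_le_pos; [lra| apply Rle_0_sqr]).
    assert (Z5 : 0 <= (- 3 * g / 2 + 2 * g + eps) * (- (b * b))).
    { replace ((- 3 * g / 2 + 2 * g + eps) * (- (b * b))) with ((- g / 2 - eps) * (b * b)) by field.
      apply Rmult_le_pos; [lra| apply Rle_0_sqr]. }
    assert (Z6 : 2 * g * (b * b) - 2 * b * c + eps * (b * b) + eps * f * (a * a) - eps * a * c
                 <= g * (b * b) + eps * f / 2 * (a * a) + c * c / (4 * del)).
    { replace (- 2 * b * c - eps * a * c) with (- z * c) by (unfold z; field).
      assert (- 2 * b * c - eps * a * c = - z * c) by (unfold z; field). lra. }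
    assert (Z7a : 0 <= (- g - m) * (b * b)) by (apply Rmult_le_pos; [lra| apply Rle_0_sqr]).
    assert (Z7b : 0 <= (- eps * f / 2 - m) * (a * a)) by (apply Rmult_le_pos; [lra| apply Rle_0_sqr]).
    assert (Z8 : - m * (a * a + b * b) <= - (m / C) * (- f * (a * a) + b * b + eps * (a * b - g / 2 * (a * a)))).
    { assert ((m / C) * (- f * (a * a) + b * b + eps * (a * b - g / 2 * (a * a))) <= (m / C) * (C * (a * a + b * b))).
      { apply Rmult_le_compat_l. left; apply Rdiv_lt_0_compat; lra. auto. }
      replace (m / C * (C * (a * a + b * b))) with (m * (a * a + b * b)) in H by (field; lra).
      lra. }
    lra. }
  assert (HV0 : forall t, 0 <= V t).
  { intros t. pose proof (HVlow t). pose proof (Rle_0_sqr (p t)). pose proof (Rle_0_sqr (q t)). unfold Rsqr in *. nra. }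
  assert (Hk : forall eta, eta > 0 -> exists T, forall t, t >= T -> h t * h t / (4 * del) <= eta).
  { intros eta He. destruct (tends0_sq h Hh (eta * (4 * del))) as [T HT]. nra.
    exists T. intros t Ht. pose proof (HT t Ht). unfold Rdiv. apply Rmult_le_reg_r with (4 * del). lra.
    rewrite Rmult_assoc, Rinv_l, Rmult_1_r by lra. lra. }
  pose proof (decay V D (fun t => h t * h t / (4 * del)) (m / C) ltac:(apply Rdiv_lt_0_compat; lra) HVD HV0 HDle Hk) as Hdec.
  split.
  - apply (from_V V p (- f / 2)). lra. intros t. pose proof (HVlow t). pose proof (Rle_0_sqr (q t)). unfold Rsqr in *. nra. auto.
  - apply (from_V V q (1 / 2)). lra. intros t. pose proof (HVlow t). pose proof (Rle_0_sqr (p t)). unfold Rsqr in *. nra. auto.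
Qed.

Definition sys_hyp N rho f g (x : R -> nat -> R) :=
  forall r, (r < 2 * N)%nat -> forall t, derivable_pt_lim (fun s => x s r) t (realMv N rho f g (x t) r).

Lemma Pexp_rho0_0 N y : Pexp N 0 y 0%nat = y 0%nat.
Proof. unfold Pexp. simpl. ring. Qed.
Lemma Pexp_rho0_S N y i : Pexp N 0 y (S i) = y (S i) - y i.
Proof. unfold Pexp. simpl. replace (i - 0)%nat with i by lia. destruct N; [ring|]. destruct (i + 1 =? N)%nat; ring. Qed.

Lemma conv_rho0 N f g x : (2 <= N)%nat -> f < 0 -> g < 0 -> sys_hyp N 0 f g x ->
  forall i, (i < N)%nat -> tends0 (fun t => x t (2 * i)%nat) /\ tends0 (fun t => x t (2 * i + 1)%nat).
Proof.
  intros HN Hf Hg Hs. induction i; intros Hi.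
  - apply (conv2d f g _ _ (fun _ => 0)); auto.
    + intros t. eapply D_eq; [|apply Hs; lia]. rewrite realMv_even by lia. auto.
    + intros t. eapply D_eq; [|apply Hs; lia]. rewrite realMv_odd by lia.
      rewrite !Pexp_rho0_0. simpl. ring.
    + intros eps He. exists 0. intros. rewrite Rabs_R0. lra.
  - destruct (IHi ltac:(lia)) as [H1 H2].
    apply (conv2d f g _ _ (fun t => f * x t (2 * i)%nat + g * x t (2 * i + 1)%nat)); auto.
    + intros t. eapply D_eq; [|apply Hs; lia]. rewrite realMv_even by lia. auto.
    + intros t. eapply D_eq; [|apply Hs; lia]. rewrite realMv_odd by lia.
      rewrite !Pexp_rho0_S. replace (2 * S i)%nat with (S (S (2 * i))) by lia.
      replace (2 * i + 1)%nat with (S (2 * i)) by lia. replace (S (S (2 * i)) + 1)%nat with (S (S (S (2 * i)))) by lia.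
      replace (2 * S i + 1)%nat with (S (S (S (2 * i)))) by lia. ring.
    + apply (tends0_lin f g (fun t => x t (2 * i)%nat) (fun t => x t (2 * i + 1)%nat)); auto.
Qed.

Lemma lyapN_alg f g K eps Bpp Bqq Epp Eqq Epq : f < 0 -> g < 0 -> K > 0 -> 0 < eps -> eps <= 1 ->
  eps * K <= - g -> eps * K <= - f -> 0 <= Bpp -> 0 <= Bqq -> 0 <= Epp -> Epp <= K * Bpp ->
  0 <= Eqq -> Eqq <= K * Bqq -> 2 * Rabs Epq <= Epp + Eqq ->
  (- f / 2) * Bpp + Eqq / 2 <= - f * Bpp + Eqq + eps * (Epq - g / 2 * Bpp) /\
  - f * Bpp + Eqq + eps * (Epq - g / 2 * Bpp) <= (- f - g + 2 * K) * (Bpp + Bqq) /\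
  2 * g * Bqq + eps * (Eqq + f * Bpp) <= - (Rmin (- g) (- eps * f)) * (Bpp + Bqq).
Proof.
  intros Hf Hg HK He0 He1 HeK1 HeK2 HB1 HB2 HE1 HE1' HE2 HE2' HX.
  assert (HA1 : - Rabs Epq <= Epq) by (pose proof (Rle_abs (- Epq)); rewrite Rabs_Ropp in *; lra).
  assert (HA2 : Epq <= Rabs Epq) by apply Rle_abs.
  assert (H1 : eps * (- Rabs Epq) <= eps * Epq) by (apply Rmult_le_compat_l; lra).
  assert (H2 : eps * Epq <= eps * Rabs Epq) by (apply Rmult_le_compat_l; lra).
  assert (H3 : eps * (2 * Rabs Epq) <= eps * (Epp + Eqq)) by (apply Rmult_le_compat_l; lra).
  assert (H4 : eps * Epp <= eps * (K * Bpp)) by (apply Rmult_le_compat_l; lra).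
  assert (H5 : eps * K * Bpp <= - f * Bpp) by (apply Rmult_le_compat_r; lra).
  assert (H5' : eps * K * Bpp <= - g * Bpp) by (apply Rmult_le_compat_r; lra).
  assert (H6 : eps * Eqq <= 1 * Eqq) by (apply Rmult_le_compat_r; lra).
  assert (H7 : 0 <= - eps * g / 2 * Bpp) by (apply Rmult_le_pos; [nra|lra]).
  assert (H8 : eps * Eqq <= eps * (K * Bqq)) by (apply Rmult_le_compat_l; lra).
  assert (H9 : eps * K * Bqq <= - g * Bqq) by (apply Rmult_le_compat_r; lra).
  assert (H10 : 0 <= - g * Bqq) by (apply Rmult_le_pos; lra).
  assert (H11 : 0 <= - f * Bqq) by (apply Rmult_le_pos; lra).
  assert (H12 : 0 <= K * Bqq) by (apply Rmult_le_pos; lra).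
  assert (H13 : 0 <= K * Bpp) by (apply Rmult_le_pos; lra).
  assert (H14 : 0 <= - g * Bpp) by (apply Rmult_le_pos; lra).
  assert (H15 : Rmin (- g) (- eps * f) * Bqq <= - g * Bqq) by (apply Rmult_le_compat_r; [lra| apply Rmin_l]).
  assert (H17 : - eps * g / 2 * Bpp <= - g / 2 * Bpp) by (apply Rmult_le_compat_r; nra).
  assert (H16 : Rmin (- g) (- eps * f) * Bpp <= - eps * f * Bpp) by (apply Rmult_le_compat_r; [lra| apply Rmin_r]).
  split; [|split]; lra.
Qed.

Lemma conv_pos N rho f g x : (2 <= N)%nat -> 0 < rho < 1 -> f < 0 -> g < 0 -> sys_hyp N rho f g x ->
  forall i, (i < N)%nat -> tends0 (fun t => x t (2 * i)%nat) /\ tends0 (fun t => x t (2 * i + 1)%nat).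
Proof.
  intros HN Hr Hf Hg Hs.
  set (p := fun s i => x s (2 * i)%nat). set (q := fun s i => x s (2 * i + 1)%nat).
  set (qd := fun t i => Pexp N rho (fun j => f * p t j + g * q t j) i).
  assert (Dp : forall t i, (i < N)%nat -> derivable_pt_lim (fun s => p s i) t (q t i)).
  { intros t i Hi. unfold p, q. eapply D_eq; [|apply Hs; lia]. rewrite realMv_even by lia. auto. }
  assert (Dq : forall t i, (i < N)%nat -> derivable_pt_lim (fun s => q s i) t (qd t i)).
  { intros t i Hi. unfold q, qd. eapply D_eq; [|apply Hs; lia]. rewrite realMv_odd by lia. rewrite Pexp_lin. auto. }
  assert (Hqd : forall t u, Ef N rho u (qd t) = f * Bf N rho u (p t) + g * Bf N rho u (q t)).
  { intros t u. unfold Ef, qd. rewrite SBP by auto. apply Bf_lin. }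
  destruct (coerc_E N rho Hr) as [K [HK HKE]].
  set (eps := Rmin 1 (Rmin (- g / K) (- f / K))).
  assert (He1 : eps <= 1) by apply Rmin_l.
  assert (He2 : eps <= - g / K) by (eapply Rle_trans; [apply Rmin_r| apply Rmin_l]).
  assert (He3 : eps <= - f / K) by (eapply Rle_trans; [apply Rmin_r| apply Rmin_r]).
  assert (He0 : 0 < eps).
  { apply Rmin_pos. lra. apply Rmin_pos; apply Rdiv_lt_0_compat; lra. }
  assert (HeK1 : eps * K <= - g).
  { apply Rmult_le_compat_r with (r := K) in He2; [|lra]. replace (- g / K * K) with (- g) in He2 by (field; lra). lra. }
  assert (HeK2 : eps * K <= - f).
  { apply Rmult_le_compat_r with (r := K) in He3; [|lra]. replace (- f / K * K) with (- f) in He3 by (field; lra). lra. }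
  set (V := fun t => - f * Bf N rho (p t) (p t) + Ef N rho (q t) (q t) +
                     eps * (Ef N rho (p t) (q t) - g / 2 * Bf N rho (p t) (p t))).
  set (D := fun t => 2 * g * Bf N rho (q t) (q t) + eps * (Ef N rho (q t) (q t) + f * Bf N rho (p t) (p t))).
  assert (HVD : forall t, derivable_pt_lim V t (D t)).
  { intros t. unfold V, D. eapply D_eq.
    2:{ apply (D_plus (fun s => - f * Bf N rho (p s) (p s) + Ef N rho (q s) (q s))
                      (fun s => eps * (Ef N rho (p s) (q s) - g / 2 * Bf N rho (p s) (p s)))).
      apply (D_plus (fun s => - f * Bf N rho (p s) (p s)) (fun s => Ef N rho (q s) (q s))).
      apply D_scal. apply (D_Bf N rho p p); auto.
      apply (D_Ef N rho q q); auto.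
      apply D_scal. apply (D_minus (fun s => Ef N rho (p s) (q s)) (fun s => g / 2 * Bf N rho (p s) (p s))).
      apply (D_Ef N rho p q); auto.
      apply D_scal. apply (D_Bf N rho p p); auto. }
    rewrite (Ef_sym N rho (qd t) (q t)). rewrite !Hqd.
    rewrite (Bf_sym N rho (q t) (p t)). field. }
  set (m := Rmin (- g) (- eps * f)).
  set (C := - f - g + 2 * K).
  assert (Hm0 : 0 < m) by (apply Rmin_pos; nra).
  assert (HC : C > 0) by (unfold C; lra).
  assert (Halg : forall t, (- f / 2) * Bf N rho (p t) (p t) + Ef N rho (q t) (q t) / 2 <= V t /\
                           V t <= C * (Bf N rho (p t) (p t) + Bf N rho (q t) (q t)) /\
                           D t <= - m * (Bf N rho (p t) (p t) + Bf N rho (q t) (q t))).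
  { intros t. apply lyapN_alg with (K := K) (Epp := Ef N rho (p t) (p t)); auto.
    apply Bf_nonneg; auto. apply Bf_nonneg; auto. apply Ef_nonneg; auto. apply Ef_nonneg; auto. apply Ef_cs; auto. }
  assert (HDle : forall t, D t <= - (m / C) * V t + 0).
  { intros t. destruct (Halg t) as [_ [H2 H3]].
    assert ((m / C) * V t <= (m / C) * (C * (Bf N rho (p t) (p t) + Bf N rho (q t) (q t)))).
    { apply Rmult_le_compat_l. left; apply Rdiv_lt_0_compat; lra. auto. }
    replace (m / C * (C * (Bf N rho (p t) (p t) + Bf N rho (q t) (q t)))) with
       (m * (Bf N rho (p t) (p t) + Bf N rho (q t) (q t))) in H by (field; lra).
    lra. }
  assert (HV0 : forall t, 0 <= V t).
  { intros t. destruct (Halg t) as [H1 _]. pose proof (Bf_nonneg N rho (p t) Hr). pose proof (Ef_nonneg N rho (q t) Hr).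
    assert (0 <= - f / 2 * Bf N rho (p t) (p t)) by (apply Rmult_le_pos; lra). lra. }
  assert (Hk : forall eta, eta > 0 -> exists T, forall t, t >= T -> (fun _ => 0) t <= eta).
  { intros eta He. exists 0. intros. simpl. lra. }
  pose proof (decay V D (fun _ => 0) (m / C) ltac:(apply Rdiv_lt_0_compat; lra) HVD HV0 HDle Hk) as Hdec.
  intros i Hi. split.
  - destruct (coerc_k N rho Hr i Hi) as [Ki [HKi HKi2]].
    apply (from_V V _ ((- f / 2) / Ki)). apply Rdiv_lt_0_compat; lra.
    + intros t. destruct (Halg t) as [H1 _]. pose proof (HKi2 (p t)). pose proof (Ef_nonneg N rho (q t) Hr).
      unfold p in H. 
      assert (- f / 2 / Ki * (x t (2 * i)%nat * x t (2 * i)%nat) <= - f / 2 / Ki * (Ki * Bf N rho (p t) (p t))).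
      { apply Rmult_le_compat_l. left. apply Rdiv_lt_0_compat; lra. auto. }
      replace (- f / 2 / Ki * (Ki * Bf N rho (p t) (p t))) with (- f / 2 * Bf N rho (p t) (p t)) in H2 by (field; lra).
      lra.
    + auto.
  - apply (from_V V _ (w N rho i / 2)). pose proof (w_pos N rho i Hr). lra.
    + intros t. destruct (Halg t) as [H1 _]. pose proof (Ef_gek N rho (q t) i Hr Hi). pose proof (Bf_nonneg N rho (p t) Hr).
      change (q t i) with (x t (2 * i + 1)%nat) in H.
      assert (0 <= - f / 2 * Bf N rho (p t) (p t)) by (apply Rmult_le_pos; lra). lra.
    + auto.
Qed.

Lemma real_conv N rho f g x : (2 <= N)%nat -> 0 <= rho < 1 -> f < 0 -> g < 0 -> sys_hyp N rho f g x ->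
  forall r, (r < 2 * N)%nat -> tends0 (fun t => x t r).
Proof.
  intros HN Hr Hf Hg Hs r Hrr.
  assert (HH : forall i, (i < N)%nat -> tends0 (fun t => x t (2 * i)%nat) /\ tends0 (fun t => x t (2 * i + 1)%nat)).
  { destruct (Req_dec rho 0) as [E|E].
    - subst rho. apply (conv_rho0 N f g); auto.
    - apply (conv_pos N rho f g); auto. lra. }
  destruct (Nat.Even_or_Odd r) as [[i Hi]|[i Hi]]; subst r.
  - apply HH. lia.
  - apply HH. lia.
Qed.

Lemma lin2_zero f g om u v : f < 0 -> g < 0 ->
  (f + om * om) * u - g * om * v = 0 -> (f + om * om) * v + g * om * u = 0 -> u = 0 /\ v = 0.
Proof.
  intros Hf Hg H1 H2.
  set (A := f + om * om). set (B := g * om). fold A B in H1, H2.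
  assert (HAB : A * A + B * B > 0).
  { destruct (Req_dec om 0) as [E|E].
    - unfold A, B. subst om. nra.
    - assert (B <> 0) by (unfold B; apply Rmult_integral_contrapositive; split; lra).
      pose proof (Rle_0_sqr A). unfold Rsqr in *. assert (B * B > 0) by nra. lra. }
  assert (E1 : (A * A + B * B) * u = 0) by (replace ((A * A + B * B) * u) with (A * (A * u - B * v) + B * (A * v + B * u)) by ring; rewrite H1, H2; ring).
  assert (E2 : (A * A + B * B) * v = 0) by (replace ((A * A + B * B) * v) with (A * (A * v + B * u) - B * (A * u - B * v)) by ring; rewrite H1, H2; ring).
  split.
  - apply Rmult_integral in E1. destruct E1; lra.
  - apply Rmult_integral in E2. destruct E2; lra.
Qed.

Lemma eig_core N rho f g om (xr xi : nat -> R) : (2 <= N)%nat -> 0 <= rho < 1 -> f < 0 -> g < 0 ->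
  (forall j, (j < N)%nat -> Pexp N rho (fun k => f * xr k - g * om * xi k) j = - (om * om) * xr j) ->
  (forall j, (j < N)%nat -> Pexp N rho (fun k => f * xi k + g * om * xr k) j = - (om * om) * xi j) ->
  forall j, (j < N)%nat -> xr j = 0 /\ xi j = 0.
Proof.
  intros HN Hr Hf Hg Ha Hb.
  set (a := fun k => f * xr k - g * om * xi k). set (b := fun k => f * xi k + g * om * xr k).
  destruct (Req_dec rho 0) as [E|E].
  - subst rho. intros j. induction j; intros Hj.
    + pose proof (Ha 0%nat Hj) as H1. pose proof (Hb 0%nat Hj) as H2. rewrite Pexp_rho0_0 in H1, H2.
      apply (lin2_zero f g om); auto; lra.
    + destruct (IHj ltac:(lia)) as [Z1 Z2].
      pose proof (Ha (S j) Hj) as H1. pose proof (Hb (S j) Hj) as H2. rewrite Pexp_rho0_S in H1, H2.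
      rewrite Z1, Z2 in H1, H2. apply (lin2_zero f g om); auto; lra.
  - assert (Hr' : 0 < rho < 1) by lra.
    assert (HS : Bf N rho a b - Bf N rho b a = 0) by (rewrite Bf_sym; ring).
    rewrite <- !SBP in HS by auto.
    rewrite (rsum_ext N (fun i => w N rho i * a i * Pexp N rho b i) (fun i => w N rho i * a i * (- (om * om) * xi i))) in HS
      by (intros; rewrite Hb; auto).
    rewrite (rsum_ext N (fun i => w N rho i * b i * Pexp N rho a i) (fun i => w N rho i * b i * (- (om * om) * xr i))) in HS
      by (intros; rewrite Ha; auto).
    rewrite <- rsum_minus in HS.
    rewrite (rsum_ext N _ (fun i => (g * (om * om * om)) * (w N rho i * (xr i * xr i + xi i * xi i)))) in HS
      by (intros; unfold a, b; ring).
    rewrite rsum_scal in HS.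
    assert (Hnn : forall i, (i < N)%nat -> 0 <= w N rho i * (xr i * xr i + xi i * xi i)).
    { intros. apply Rmult_le_pos. left; apply w_pos; auto. pose proof (Rle_0_sqr (xr i)); pose proof (Rle_0_sqr (xi i)); unfold Rsqr in *; lra. }
    destruct (Req_dec om 0) as [Eo|Eo].
    + subst om.
      assert (Haa : forall u, (forall j, (j < N)%nat -> Pexp N rho u j = 0) -> forall k, (k < N)%nat -> u k = 0).
      { intros u Hu k Hk. assert (HB : Bf N rho u u = 0).
        { rewrite <- SBP by auto. rewrite (rsum_ext N _ (fun _ => 0)). apply rsum_zero. intros. rewrite Hu; auto; ring. }
        destruct (coerc_k N rho Hr' k Hk) as [K [HK HK2]]. pose proof (HK2 u). rewrite HB in H.
        assert (u k * u k = 0) by (pose proof (Rle_0_sqr (u k)); unfold Rsqr in *; lra).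
        apply Rmult_integral in H0; destruct H0; auto. }
      intros j Hj. split.
      * assert (Hz : a j = 0).
        { apply (Haa a) with (k := j); auto. intros. unfold a. rewrite Ha; auto. ring. }
        unfold a in Hz. replace (f * xr j - g * 0 * xi j) with (f * xr j) in Hz by ring.
        apply Rmult_integral in Hz. destruct Hz; lra.
      * assert (Hz : b j = 0).
        { apply (Haa b) with (k := j); auto. intros. unfold b. rewrite Hb; auto. ring. }
        unfold b in Hz. replace (f * xi j + g * 0 * xr j) with (f * xi j) in Hz by ring.
        apply Rmult_integral in Hz. destruct Hz; lra.
    + assert (HS2 : rsum N (fun i => w N rho i * (xr i * xr i + xi i * xi i)) = 0).
      { assert (g * (om * om * om) <> 0).
        { apply Rmult_integral_contrapositive. split. lra. apply Rmult_integral_contrapositive. split; auto. }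
        apply Rmult_integral in HS. destruct HS as [H0|H0]; [contradiction|exact H0]. }
      intros j Hj. pose proof (rsum_zero_terms N _ Hnn HS2 j Hj).
      pose proof (w_pos N rho j Hr').
      apply Rmult_integral in H. destruct H; [lra|].
      pose proof (Rle_0_sqr (xr j)); pose proof (Rle_0_sqr (xi j)); unfold Rsqr in *.
      split; nra.
Qed.

Definition Cone : Cx := (1, 0).
Definition Cinv (z : Cx) : Cx := (fst z / (fst z * fst z + snd z * snd z), - snd z / (fst z * fst z + snd z * snd z)).
Definition Cdiv (z w : Cx) : Cx := Cmul z (Cinv w).

Lemma Cx_eq (z w : Cx) : fst z = fst w -> snd z = snd w -> z = w.
Proof. destruct z, w; simpl; intros; subst; auto. Qed.

Lemma Cring : ring_theory C0 Cone Cadd Cmul Csub Copp (@eq Cx).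
Proof.
  constructor; intros; apply Cx_eq; unfold Cadd, Cmul, Csub, Copp, C0, Cone; simpl; ring.
Qed.
Add Ring Cxring : Cring.

Lemma C1_neq_C0 : Cone <> C0.
Proof. unfold Cone, C0. intros H. injection H. lra. Qed.

Lemma Cnz (z : Cx) : z <> C0 -> fst z * fst z + snd z * snd z <> 0.
Proof.
  intros H E. apply H. destruct z as [a b]. simpl in E. unfold C0.
  assert (a = 0) by nra. assert (b = 0) by nra. subst; auto.
Qed.

Lemma Cfield : field_theory C0 Cone Cadd Cmul Csub Copp Cdiv Cinv (@eq Cx).
Proof.
  constructor.
  - exact Cring.
  - exact C1_neq_C0.
  - reflexivity.
  - intros p Hp. pose proof (Cnz p Hp). apply Cx_eq; unfold Cmul, Cinv, Cone; simpl; field; auto.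
Qed.
Add Field Cxfield : Cfield.

Lemma fst_Cadd z w : fst (Cadd z w) = fst z + fst w. Proof. reflexivity. Qed.
Lemma snd_Cadd z w : snd (Cadd z w) = snd z + snd w. Proof. reflexivity. Qed.
Lemma fst_Csub z w : fst (Csub z w) = fst z - fst w. Proof. unfold Csub, Cadd, Copp; simpl; ring. Qed.
Lemma snd_Csub z w : snd (Csub z w) = snd z - snd w. Proof. unfold Csub, Cadd, Copp; simpl; ring. Qed.
Lemma fst_Cmul z w : fst (Cmul z w) = fst z * fst w - snd z * snd w. Proof. reflexivity. Qed.
Lemma snd_Cmul z w : snd (Cmul z w) = fst z * snd w + snd z * fst w. Proof. reflexivity. Qed.

Definition Pc N rho (x : nat -> Cx) (j : nat) : Cx :=
  (Pexp N rho (fun k => fst (x k)) j, Pexp N rho (fun k => snd (x k)) j).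

Lemma Pc_scal N rho c x j : Pc N rho (fun k => Cmul c (x k)) j = Cmul c (Pc N rho x j).
Proof.
  unfold Pc, Pexp. apply Cx_eq; simpl; destruct (j =? 0)%nat; try ring; destruct (j + 1 =? N)%nat; ring.
Qed.

Lemma Pc_ext N rho x y j : (2 <= N)%nat -> (j < N)%nat -> (forall k, (k < N)%nat -> x k = y k) -> Pc N rho x j = Pc N rho y j.
Proof. intros HN Hj H. unfold Pc. f_equal; apply Pexp_ext; auto; intros; rewrite H; auto. Qed.

Lemma Pc_expl N rho x j : (2 <= N)%nat -> (j < N)%nat ->
  Pc N rho x j =
  if (j =? 0)%nat then Csub (x 0%nat) (Cmul (RtoC rho) (x 1%nat))
  else if (j + 1 =? N)%nat then Csub (x j) (x (j - 1)%nat)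
  else Csub (Csub (x j) (Cmul (RtoC (1 - rho)) (x (j - 1)%nat))) (Cmul (RtoC rho) (x (j + 1)%nat)).
Proof.
  intros HN Hj. unfold Pc, Pexp.
  destruct (j =? 0)%nat; [|destruct (j + 1 =? N)%nat];
  apply Cx_eq; unfold Csub, Cadd, Copp, Cmul, RtoC; simpl; ring.
Qed.

Lemma Mv_even_C N rho f g v j : (j < N)%nat -> Mv N rho f g v (2 * j)%nat = v (2 * j + 1)%nat.
Proof. intros. apply Cx_eq. rewrite Mv_fst, realMv_even; auto. rewrite Mv_snd, realMv_even; auto. Qed.

Lemma Mv_odd_C N rho f g v j : (2 <= N)%nat -> (j < N)%nat ->
  Mv N rho f g v (2 * j + 1)%nat =
  Cadd (Cmul (RtoC f) (Pc N rho (fun k => v (2 * k)%nat) j)) (Cmul (RtoC g) (Pc N rho (fun k => v (2 * k + 1)%nat) j)).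
Proof.
  intros. apply Cx_eq.
  - rewrite Mv_fst, realMv_odd; auto. unfold Pc, Cadd, Cmul, RtoC; simpl. ring.
  - rewrite Mv_snd, realMv_odd; auto. unfold Pc, Cadd, Cmul, RtoC; simpl. ring.
Qed.

Lemma rsum_scal_r n F a : rsum n (fun i => F i * a) = rsum n F * a.
Proof. induction n; simpl; [ring|rewrite IHn; ring]. Qed.

Lemma Mv_scal N rho f g v c r : Mv N rho f g (fun k => Cmul (v k) c) r = Cmul (Mv N rho f g v r) c.
Proof.
  apply Cx_eq.
  - rewrite Mv_fst, fst_Cmul, Mv_fst, Mv_snd. unfold realMv.
    rewrite <- !rsum_scal_r, <- rsum_minus. apply rsum_ext. intros. simpl. ring.
  - rewrite Mv_snd, snd_Cmul, Mv_fst, Mv_snd. unfold realMv.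
    rewrite <- !rsum_scal_r, <- rsum_plus. apply rsum_ext. intros. simpl. ring.
Qed.

Definition build (nu : Cx) (x : nat -> Cx) : cvec :=
  fun r => if (r mod 2 =? 0)%nat then x (r / 2)%nat else Cmul nu (x (r / 2)%nat).

Lemma build_even nu x j : build nu x (2 * j)%nat = x j.
Proof. unfold build. rewrite mod2_even, div2_even. reflexivity. Qed.
Lemma build_odd nu x j : build nu x (2 * j + 1)%nat = Cmul nu (x j).
Proof. unfold build. rewrite mod2_odd, div2_odd. reflexivity. Qed.

Lemma Mv_build_even N rho f g nu x j : (j < N)%nat -> Mv N rho f g (build nu x) (2 * j)%nat = Cmul nu (x j).
Proof. intros. rewrite Mv_even_C, build_odd; auto. Qed.

Lemma Mv_build_odd N rho f g nu x j : (2 <= N)%nat -> (j < N)%nat ->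
  Mv N rho f g (build nu x) (2 * j + 1)%nat = Cmul (Cadd (RtoC f) (Cmul (RtoC g) nu)) (Pc N rho x j).
Proof.
  intros. rewrite Mv_odd_C by auto.
  rewrite (Pc_ext N rho (fun k => build nu x (2 * k)%nat) x) by (auto; intros; apply build_even).
  rewrite (Pc_ext N rho (fun k => build nu x (2 * k + 1)%nat) (fun k => Cmul nu (x k))) by (auto; intros; apply build_odd).
  rewrite Pc_scal. ring.
Qed.

Lemma Pexp_comb N rho a b u v j :
  Pexp N rho (fun k => a * u k - b * v k) j = a * Pexp N rho u j - b * Pexp N rho v j.
Proof.
  replace (fun k => a * u k - b * v k) with (fun k => a * u k + (- b) * v k)
    by (apply functional_extensionality; intros; ring).
  rewrite Pexp_lin. ring.
Qed.
Lemma Pexp_comb2 N rho a b u v j :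
  Pexp N rho (fun k => a * u k + b * v k) j = a * Pexp N rho u j + b * Pexp N rho v j.
Proof. apply Pexp_lin. Qed.

Lemma no_eig_core N rho f g om (x : nat -> Cx) : (2 <= N)%nat -> 0 <= rho < 1 -> f < 0 -> g < 0 ->
  (forall j, (j < N)%nat -> Cmul (Cadd (RtoC f) (Cmul (RtoC g) (0, om))) (Pc N rho x j) = Cmul (Cmul (0, om) (0, om)) (x j)) ->
  forall j, (j < N)%nat -> x j = C0.
Proof.
  intros HN Hr Hf Hg H j Hj.
  assert (HH : forall j, (j < N)%nat -> fst (x j) = 0 /\ snd (x j) = 0).
  { apply (eig_core N rho f g om); auto.
    - intros k Hk. rewrite Pexp_comb. pose proof (f_equal fst (H k Hk)) as E.
      unfold Pc, Cmul, Cadd, RtoC in E; simpl in E. lra.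
    - intros k Hk. rewrite Pexp_comb2. pose proof (f_equal snd (H k Hk)) as E.
      unfold Pc, Cmul, Cadd, RtoC in E; simpl in E. lra. }
  destruct (HH j Hj). apply Cx_eq; simpl; auto.
Qed.

Lemma no_eig N rho f g om (v : cvec) : (2 <= N)%nat -> 0 <= rho < 1 -> f < 0 -> g < 0 ->
  (forall r, (r < 2 * N)%nat -> Mv N rho f g v r = Cmul (0, om) (v r)) ->
  forall r, (r < 2 * N)%nat -> v r = C0.
Proof.
  intros HN Hr Hf Hg H.
  assert (Hodd : forall j, (j < N)%nat -> v (2 * j + 1)%nat = Cmul (0, om) (v (2 * j)%nat)).
  { intros j Hj. rewrite <- (Mv_even_C N rho f g v j Hj). apply H. lia. }
  assert (Hx : forall j, (j < N)%nat -> v (2 * j)%nat = C0).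
  { apply (no_eig_core N rho f g om (fun k => v (2 * k)%nat)); auto.
    intros j Hj. pose proof (H (2 * j + 1)%nat ltac:(lia)) as E.
    rewrite Mv_odd_C in E by auto.
    rewrite (Pc_ext N rho (fun k => v (2 * k + 1)%nat) (fun k => Cmul (0, om) (v (2 * k)%nat))) in E by auto.
    rewrite Pc_scal in E. rewrite Hodd in E by auto.
    transitivity (Cadd (Cmul (RtoC f) (Pc N rho (fun k : nat => v (2 * k)%nat) j))
       (Cmul (RtoC g) (Cmul (0, om) (Pc N rho (fun k : nat => v (2 * k)%nat) j)))). ring.
    rewrite E. ring. }
  intros r Hr2. destruct (Nat.Even_or_Odd r) as [[i Hi]|[i Hi]]; subst r.
  - apply Hx. lia.
  - rewrite Hodd, Hx by lia. apply Cx_eq; simpl; ring.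
Qed.

Fixpoint sh (lam kap kr ko : Cx) (k : nat) : Cx * Cx :=
  match k with
  | O => (Cone, Cdiv lam kap)
  | S k' => let p := sh lam kap kr ko k' in
            (snd p, Cdiv (Csub (Cmul lam (snd p)) (Cmul kr (fst p))) ko)
  end.

Lemma sh_SS lam kap kr ko k :
  fst (sh lam kap kr ko (S (S k))) =
  Cdiv (Csub (Cmul lam (fst (sh lam kap kr ko (S k)))) (Cmul kr (fst (sh lam kap kr ko k)))) ko.
Proof. reflexivity. Qed.

Lemma RtoC_nz a : a <> 0 -> RtoC a <> C0.
Proof. intros H E. apply H. apply (f_equal fst) in E. exact E. Qed.

Lemma existence N rho f g om : (2 <= N)%nat -> 0 <= rho < 1 -> f < 0 -> g < 0 ->
  exists a : cvec, forall r, (r < 2 * N)%nat ->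
    Csub (Mv N rho f g a r) (Cmul (0, om) (a r)) = Copp (g0 rho f g (0, om) r).
Proof.
  intros HN Hr Hf Hg.
  set (nu := (0, om) : Cx).
  set (kap := Cadd (RtoC f) (Cmul (RtoC g) nu)).
  set (nu2 := Cmul nu nu).
  set (lam := Csub kap nu2).
  set (oc := RtoC (1 - rho)). set (rc := RtoC rho).
  assert (Hk : kap <> C0).
  { intros E. apply (f_equal fst) in E. unfold kap, Cadd, Cmul, RtoC, nu, C0 in E. simpl in E. lra. }
  assert (Ho : oc <> C0) by (apply RtoC_nz; lra).
  set (s := fun k => fst (sh lam kap (Cmul kap rc) (Cmul kap oc) k)).
  set (x := fun j => s (N - 1 - j)%nat).
  assert (Hrows : forall j, (1 <= j < N)%nat -> Cmul kap (Pc N rho x j) = Cmul nu2 (x j)).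
  { intros j Hj. rewrite Pc_expl by lia.
    destruct (Nat.eqb_spec j 0); try lia.
    destruct (Nat.eqb_spec (j + 1) N).
    - unfold x. replace (N - 1 - j)%nat with 0%nat by lia. replace (N - 1 - (j - 1))%nat with 1%nat by lia.
      unfold s. simpl. unfold lam. field. auto.
    - unfold x. destruct (N - 1 - j)%nat as [|k] eqn:Ek; [lia|].
      replace (N - 1 - (j - 1))%nat with (S (S k)) by lia. replace (N - 1 - (j + 1))%nat with k by lia.
      unfold s. rewrite sh_SS. fold oc rc. unfold lam. field. split; auto. }
  set (L := Csub (Cmul kap (Pc N rho x 0)) (Cmul nu2 (x 0%nat))).
  assert (HL : L <> C0).
  { intros EL.
    assert (Heig : forall r, (r < 2 * N)%nat -> Mv N rho f g (build nu x) r = Cmul (0, om) (build nu x r)).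
    { intros r Hr2. destruct (Nat.Even_or_Odd r) as [[i Hi]|[i Hi]]; subst r.
      - rewrite Mv_build_even, build_even by lia. auto.
      - rewrite Mv_build_odd, build_odd by lia. fold kap.
        destruct (Nat.eq_dec i 0).
        + subst i. assert (Cmul kap (Pc N rho x 0) = Cmul nu2 (x 0%nat)).
          { transitivity (Cadd L (Cmul nu2 (x 0%nat))). unfold L; ring. rewrite EL. ring. }
          rewrite H. unfold nu2, nu. ring.
        + rewrite Hrows by lia. unfold nu2, nu. ring. }
    pose proof (no_eig N rho f g om (build nu x) HN Hr Hf Hg Heig (2 * (N - 1))%nat ltac:(lia)) as E.
    rewrite build_even in E. unfold x, s in E. replace (N - 1 - (N - 1))%nat with 0%nat in E by lia.
    simpl in E. apply C1_neq_C0. exact E. }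
  set (c := Cdiv (Cmul oc kap) L).
  exists (build nu (fun j => Cmul c (x j))).
  assert (Hg0 : forall r, g0 rho f g (0, om) r = if (r =? 1)%nat then Cmul (Copp oc) kap else C0).
  { intros r. unfold g0, e2. fold nu. fold kap. destruct (r =? 1)%nat; apply Cx_eq; unfold oc, Copp, Cmul, RtoC, C0; simpl; ring. }
  intros r Hr2. rewrite Hg0. destruct (Nat.Even_or_Odd r) as [[i Hi]|[i Hi]]; subst r.
  - rewrite Mv_build_even, build_even by lia.
    destruct (Nat.eqb_spec (2 * i) 1); try lia. fold nu. apply Cx_eq; unfold Csub, Cadd, Copp, C0; simpl; ring.
  - rewrite Mv_build_odd, build_odd by lia. fold nu kap.
    rewrite Pc_scal.
    destruct (Nat.eq_dec i 0).
    + subst i. simpl. unfold c. fold nu2.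
      transitivity (Cmul (Cdiv (Cmul oc kap) L) L). unfold L, nu2. ring. field. auto.
    + destruct (Nat.eqb_spec (2 * i + 1) 1); try lia.
      transitivity (Cmul c (Csub (Cmul kap (Pc N rho x i)) (Cmul nu2 (x i)))). unfold nu2. ring.
      rewrite Hrows by lia. apply Cx_eq; unfold Csub, Cadd, Copp, Cmul, C0; simpl; ring.
Qed.

Lemma D_cos_lin om t : derivable_pt_lim (fun s => cos (om * s)) t (- (om * sin (om * t))).
Proof.
  apply D_eq with (- sin (om * t) * om). ring.
  apply (derivable_pt_lim_comp (fun s => om * s) cos t om (- sin (om * t))).
  apply D_eq with (om * 1). ring. apply D_scal. apply derivable_pt_lim_id.
  apply derivable_pt_lim_cos.
Qed.
Lemma D_sin_lin om t : derivable_pt_lim (fun s => sin (om * s)) t (om * cos (om * t)).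
Proof.
  apply D_eq with (cos (om * t) * om). ring.
  apply (derivable_pt_lim_comp (fun s => om * s) sin t om (cos (om * t))).
  apply D_eq with (om * 1). ring. apply D_scal. apply derivable_pt_lim_id.
  apply derivable_pt_lim_sin.
Qed.

Lemma Cexp_eq om t : Cexp (Cmul (RtoC t) (0, om)) = (cos (om * t), sin (om * t)).
Proof.
  unfold Cexp, Cmul, RtoC. simpl.
  replace (t * 0 - 0 * om) with 0 by ring. replace (t * om + 0 * 0) with (om * t) by ring.
  rewrite exp_0. f_equal; ring.
Qed.

Lemma sqrt_small x y e : 0 < e -> Rabs x < e / 2 -> Rabs y < e / 2 -> sqrt (x ^ 2 + y ^ 2) < e.
Proof.
  intros He Hx Hy. rewrite <- (sqrt_pow2 e) by lra. apply sqrt_lt_1.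
  pose proof (pow2_ge_0 x); pose proof (pow2_ge_0 y); lra. pose proof (pow2_ge_0 e); lra.
  rewrite <- (pow2_abs x), <- (pow2_abs y).
  pose proof (Rabs_pos x); pose proof (Rabs_pos y). simpl. nra.
Qed.

Theorem mainTheorem3 (N : nat) (rho f g : R) (nu : Cx)
  (HN : (2 <= N)%nat) (Hrho : 0 <= rho < 1) (Hf : f < 0) (Hg : g < 0)
  (Hnu : fst nu = 0) :
  ~ is_eigenvalue N rho f g nu /\
  exists a : cvec,
    (forall r, (r < 2 * N)%nat ->
       Csub (Mv N rho f g a r) (Cmul nu (a r)) = Copp (g0 rho f g nu r)) /\
    (forall z : R -> cvec, is_solution N rho f g nu z ->
       forall r, (r < 2 * N)%nat ->
       forall eps : R, eps > 0 -> exists T : R, forall t : R, t >= T ->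
         Cmod (Csub (z t r) (Cmul (a r) (Cexp (Cmul (RtoC t) nu)))) < eps).
Proof.
  destruct nu as [nr om]. simpl in Hnu. subst nr.
  split.
  { intros [v [[r0 [Hr0 Hv0]] Hv]]. apply Hv0. apply (no_eig N rho f g om v); auto. }
  destruct (existence N rho f g om HN Hrho Hf Hg) as [a Ha].
  exists a. split; auto.
  intros z Hz r Hr eps Heps.
  assert (HMa : forall c, (c < 2 * N)%nat -> Mv N rho f g a c = Csub (Cmul (0, om) (a c)) (g0 rho f g (0, om) c)).
  { intros c Hc. pose proof (Ha c Hc) as E.
    transitivity (Cadd (Csub (Mv N rho f g a c) (Cmul (0, om) (a c))) (Cmul (0, om) (a c))). ring.
    rewrite E. ring. }
  set (er := fun t c => fst (z t c) - (fst (a c) * cos (om * t) - snd (a c) * sin (om * t))).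
  set (ei := fun t c => snd (z t c) - (fst (a c) * sin (om * t) + snd (a c) * cos (om * t))).
  assert (Hkey : forall t c, (c < 2 * N)%nat ->
     Csub (Cadd (Mv N rho f g (z t) c) (Gamma0 rho f g (0, om) t c)) (Cmul (0, om) (Cmul (a c) (cos (om * t), sin (om * t))))
     = Csub (Mv N rho f g (z t) c) (Mv N rho f g (fun k => Cmul (a k) (cos (om * t), sin (om * t))) c)).
  { intros t c Hc. rewrite Mv_scal. rewrite HMa by auto. unfold Gamma0. rewrite Cexp_eq. ring. }
  assert (Hsr : sys_hyp N rho f g er).
  { intros c Hc t. unfold er.
    eapply D_eq.
    2:{ apply (D_minus (fun s => fst (z s c)) (fun s => fst (a c) * cos (om * s) - snd (a c) * sin (om * s))).
        apply (Hz c Hc t).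
        apply (D_minus (fun s => fst (a c) * cos (om * s)) (fun s => snd (a c) * sin (om * s))).
        apply D_scal. apply D_cos_lin. apply D_scal. apply D_sin_lin. }
    pose proof (f_equal fst (Hkey t c Hc)) as E. rewrite !fst_Csub in E.
    rewrite !Mv_fst in E. unfold realMv in E |- *. rewrite <- rsum_minus in E.
    match type of E with _ = ?R => transitivity R end; [rewrite <- E; simpl; ring | apply rsum_ext; intros; simpl; ring]. }
  assert (Hsi : sys_hyp N rho f g ei).
  { intros c Hc t. unfold ei.
    eapply D_eq.
    2:{ apply (D_minus (fun s => snd (z s c)) (fun s => fst (a c) * sin (om * s) + snd (a c) * cos (om * s))).
        apply (Hz c Hc t).
        apply (D_plus (fun s => fst (a c) * sin (om * s)) (fun s => snd (a c) * cos (om * s))).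
        apply D_scal. apply D_sin_lin. apply D_scal. apply D_cos_lin. }
    pose proof (f_equal snd (Hkey t c Hc)) as E. rewrite !snd_Csub in E.
    rewrite !Mv_snd in E. unfold realMv in E |- *. rewrite <- rsum_minus in E.
    match type of E with _ = ?R => transitivity R end; [rewrite <- E; simpl; ring | apply rsum_ext; intros; simpl; ring]. }
  destruct (real_conv N rho f g er HN Hrho Hf Hg Hsr r Hr (eps / 2) ltac:(lra)) as [T1 H1].
  destruct (real_conv N rho f g ei HN Hrho Hf Hg Hsi r Hr (eps / 2) ltac:(lra)) as [T2 H2].
  exists (Rmax T1 T2). intros t Ht.
  pose proof (H1 t ltac:(pose proof (Rmax_l T1 T2); lra)).
  pose proof (H2 t ltac:(pose proof (Rmax_r T1 T2); lra)).
  unfold Cmod. rewrite Cexp_eq.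
  replace (fst (Csub (z t r) (Cmul (a r) (cos (om * t), sin (om * t))))) with (er t r)
    by (unfold er; rewrite fst_Csub; simpl; ring).
  replace (snd (Csub (z t r) (Cmul (a r) (cos (om * t), sin (om * t))))) with (ei t r)
    by (unfold ei; rewrite snd_Csub; simpl; ring).
  apply sqrt_small; auto; lra.
Qed.
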